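(* Consider the system $\dot x(t) = f(x(t))$, $x(0)=x_0$, where $x\in\mathbb R^n$, $f:\mathbb R^n\to\mathbb R^n$ is continuous with $f(0)=0$, and solutions exist and are unique. Let $V:\mathbb R^n\to\mathbb R$ be a continuously differentiable, positive definite, proper function satisfying \[ \dot V(x) \leq -\alpha_1V(x)^{\gamma_1}-\alpha_2V(x)^{\gamma_2}+\delta_1V(x) \] for all $x\in\mathbb R^n\setminus\{0\}$ along the trajectories of the system, where $\alpha_1,\alpha_2>0$, $\delta_1\in\mathbb R$, $\gamma_1 = 1+\frac{1}{\mu}$, $\gamma_2 = 1-\frac{1}{\mu}$ for some $\mu>1$. Let $r\coloneqq \frac{\delta_1}{2\sqrt{\alpha_1\alpha_2}}$, let $0<k<1$, $k_1 = \sqrt{\frac{4\alpha_1\alpha_2-\delta_1^2}{4\alpha_1^2}}$ and $k_2 = -\frac{\delta_1}{\sqrt{4\alpha_1\alpha_2-\delta_1^2}}$. Then there exists a neighborhood $D\subseteq\mathbb R^n$ of the origin such that for all $x(0)\in D$, the trajectories satisfy $x(t)\in D$ for all $t\geq 0$ and reach the origin within a fixed time $T$, where \[ D = \begin{cases} \mathbb R^n, & r<1,\\[2pt] \left\{x \;\middle|\; V(x)\leq k^\mu\left(\frac{\delta_1-\sqrt{\delta_1^2-4\alpha_1\alpha_2}}{2\alpha_1}\right)^\mu\right\}, & r\geq 1,\end{cases} \] and \[ T\leq \begin{cases} \frac{\mu\pi}{2\sqrt{\alpha_1\alpha_2}}, & r\leq 0,\\[2pt] \frac{\mu}{\alpha_1k_1}\left(\frac{\pi}{2}-\tan^{-1}k_2\right),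 & 0\leq r<1,\\[2pt] \frac{\mu k}{(1-k)\sqrt{\alpha_1\alpha_2}}, & r\geq 1.\end{cases} \]
   Context: $\dot V(x)$ denotes the time derivative of $V$ along trajectories, i.e. $\frac{\partial V}{\partial x}(x) f(x)$. A function is proper here in the sense of radially unbounded (sublevel sets are compact). $\tan^{-1}$ is the principal inverse tangent. *)

(* Defs.v *)
From HB Require Import structures.
From mathcomp Require Import all_boot all_order all_algebra.
From mathcomp Require Import all_classical all_reals all_analysis.
Set Implicit Arguments. Unset Strict Implicit. Unset Printing Implicit Defensive.
Import Order.TTheory GRing.Theory Num.Theory.
Import numFieldNormedType.Exports.
Local Open Scope classical_set_scope.
Local Open Scope ring_scope.

(* V : R^n -> R is continuously differentiable: differentiable everywhere and
   the differential x |-> dV(x) is continuous (tested on each direction v,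
   which in finite dimension is continuity of the Jacobian). *)
Definition C1 {R : realType} {n : nat} (V : 'rV[R]_n -> R) : Prop :=
  (forall x, differentiable V x) /\ (forall v, continuous (fun x => 'd V x v)).

Definition positive_definite {R : realType} {n : nat} (V : 'rV[R]_n -> R) : Prop :=
  V 0 = 0 /\ forall x, x != 0 -> 0 < V x.

(* proper = radially unbounded: all sublevel sets compact *)
Definition proper_fun {R : realType} {n : nat} (V : 'rV[R]_n -> R) : Prop :=
  forall c : R, compact [set x | V x <= c].

Definition is_solution {R : realType} {n : nat} (f : 'rV[R]_n -> 'rV[R]_n)
  (x0 : 'rV[R]_n) (x : R -> 'rV[R]_n) : Prop :=
  x 0 = x0 /\ {within `[0, +oo[%classic, continuous x} /\
  forall t : R, 0 < t -> is_derive t 1 x (f (x t)).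

Definition settles_by {R : realType} {n : nat} (x : R -> 'rV[R]_n) (T : R) : Prop :=
  forall t, T <= t -> x t = 0.

(* Main.v *)
Require Import Defs.
From HB Require Import structures.
From mathcomp Require Import all_boot all_order all_algebra.
From mathcomp Require Import all_classical all_reals all_analysis.
From mathcomp Require Import ring lra.
Import Order.TTheory GRing.Theory Num.Theory.
Import numFieldNormedType.Exports.
Local Open Scope classical_set_scope.
Local Open Scope ring_scope.
Section Gen.
Context {R : realType}.

Lemma mono_on (h dh : R -> R) (b : R) :
  (forall t : R, 0 < t -> is_derive t 1 h (dh t)) ->
  {within `[0, +oo[, continuous h} ->
  (forall t : R, 0 < t < b -> dh t <= 0) ->
  forall s t : R, 0 <= s -> s <= t -> t <= b -> h t <= h s.
Proof.
move=> hd hc hneg s t s0 st tb.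
case: (ltgtP s t) st => // [st _|<-]; last by [].
have hcst : {within `[s, t], continuous h}.
  apply: continuous_subspaceW hc => u /=; rewrite !in_itv /= => /andP[su _].
  by rewrite andbT (le_trans s0 su).
have [c cst E] : exists2 c, c \in `]s, t[ & h t - h s = dh c * (t - s).
  apply: MVT st _ hcst => u; rewrite in_itv /= => /andP[h1 _].
  exact: hd (le_lt_trans s0 h1).
move: cst; rewrite in_itv /= => /andP[c1 c2].
rewrite -subr_le0 E; apply: mulr_le0_ge0; last by rewrite subr_ge0 ltW.
apply: hneg; rewrite (le_lt_trans s0 c1) /=.
exact: lt_le_trans c2 tb.
Qed.

Lemma settle (g dg : R -> R) (T B : R) :
  0 < T -> (forall t : R, 0 < t <= T -> is_derive t 1 g (dg t)) ->
  (forall t : R, 0 < t < T -> dg t <= -1) ->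
  (forall t : R, 0 < t <= T -> g t <= B + T) -> B < g T -> False.
Proof.
move=> T0 hd hneg hub hB.
set e := Num.min (g T - B) T / 2.
have hm0 : 0 < Num.min (g T - B) T by rewrite lt_min subr_gt0 hB T0.
have e0 : 0 < e by rewrite divr_gt0.
have m1 : Num.min (g T - B) T <= g T - B by rewrite ge_min lexx.
have m2 : Num.min (g T - B) T <= T by rewrite ge_min lexx orbT.
have eT : e < T by rewrite /e; lra.
have eg : e < g T - B by rewrite /e; lra.
have hc : {within `[e, T], continuous g}.
  apply: continuous_in_subspaceT => u; rewrite inE /= in_itv /= => /andP[eu uT].
  have := hd u; rewrite (lt_le_trans e0 eu) uT => /(_ isT) [/derivable1_diffP du _].
  exact: differentiable_continuous.
have [c ceT E] : exists2 c, c \in `]e, T[ & g T - g e = dg c * (T - e).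
  apply: MVT eT _ hc => u; rewrite in_itv /= => /andP[h1 h2].
  by apply: hd; rewrite (lt_trans e0 h1) ltW.
move: ceT; rewrite in_itv /= => /andP[c1 c2].
have := hneg c; rewrite (lt_trans e0 c1) c2 => /(_ isT) dc.
have ge := hub e; rewrite e0 (ltW eT) in ge; have {}ge := ge isT.
have : dg c * (T - e) <= -1 * (T - e).
  by apply: ler_wpM2r => //; rewrite subr_ge0 ltW.
rewrite -E; lra.
Qed.

Lemma no_up (h dh : R -> R) (c M : R) :
  (forall t : R, 0 < t -> is_derive t 1 h (dh t)) ->
  {within `[0, +oo[, continuous h} ->
  h 0 <= c -> c < M ->
  (forall t : R, 0 < t -> h t < M -> dh t <= 0) ->
  forall t : R, 0 <= t -> h t <= c.
Proof.
move=> hd hc h0 cM hneg t1 t10.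
rewrite leNgt; apply/negP => ct1.
set m := Num.min (h t1) M.
have cm : c < m by rewrite lt_min ct1 cM.
have mt1 : m <= h t1 by rewrite ge_min lexx.
have mM : m <= M by rewrite ge_min lexx orbT.
have t1p : 0 < t1.
  rewrite lt_neqAle t10 andbT; apply/eqP => E; move: ct1; rewrite -E; lra.
have hr : h x @[x --> 0^'+] --> h 0 by have [_] := (continuous_within_itvcyP 0 h).1 hc.
have [e e0 He] : exists2 e : R, 0 < e & forall u, 0 < u < e -> h u < m.
  have hm : h 0 < m by lra.
  have : \forall u \near 0^'+, h u < m by exact: cvgr_lt hr _ hm.
  rewrite near_withinE => /nbhs_ballP[e /= e0 He].
  exists e => // u /andP[u0 ue]; apply: He => //.
  by rewrite /ball /= sub0r normrN gtr0_norm.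
set a := Num.min (e / 2) t1.
have a0 : 0 < a by rewrite lt_min t1p divr_gt0.
have at1 : a <= t1 by rewrite ge_min lexx orbT.
have ae : a < e.
  have : a <= e / 2 by rewrite ge_min lexx.
  lra.
have hcont : forall u, 0 < u -> {for u, continuous h}.
  move=> u u0; have [/derivable1_diffP du _] := hd u u0.
  exact: differentiable_continuous.
pose g := h \o (fun u => Num.max u a).
have maxc : continuous (fun u : R => Num.max u a).
  have := @max_fun_continuous _ _ R id (cst a).
  by apply; [move=> ?; exact: cvg_id | exact: cst_continuous].
have gc : continuous g.
  move=> u; apply: continuous_comp; first exact: maxc.
  by apply: hcont; rewrite (lt_le_trans a0)// le_max lexx orbT.
pose A := `[a, t1] `&` (g @^-1` [set y | m <= y]).
have cA : compact A.
  apply: compact_closedI; first exact: segment_compact.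
  by apply: preimage_closed; [move=> u _; exact: gc | exact: closed_ge].
have gE : forall u, a <= u -> g u = h u.
  by move=> u au; rewrite /g /=; congr h; apply/max_idPl.
have A0 : A !=set0.
  exists t1; split; first by rewrite /= in_itv /= at1 lexx.
  by rewrite /= gE.
have idc : {within A, continuous (@id R)}.
  by apply: continuous_subspaceT => ?; exact: cvg_id.
have [s As smin] := compact_EVT_min A0 cA idc.
move: As; rewrite inE => -[]; rewrite /= in_itv /= => /andP[has st1].
rewrite gE // => ms.
have hlt : forall u, 0 < u < s -> h u < m.
  move=> u /andP[u0 us]; case: (ltP u e) => [ue|eu]; first by apply: He; rewrite u0.
  rewrite ltNge; apply/negP => mu.
  have au : a <= u by rewrite ltW // (lt_le_trans ae).
  have : u \in A.
    rewrite inE; split; first by rewrite /= in_itv /= au /= ltW // (lt_le_trans us).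
    by rewrite /= gE.
  by move/smin; rewrite /= leNgt us.
have := @mono_on h dh s hd hc _ 0 s (lexx 0) (ltW (lt_le_trans a0 has)) (lexx s).
have : h s <= h 0 -> False by lra.
move=> H1 H2; apply: H1; apply: H2.
move=> u /andP[u0 us]; apply: hneg => //.
by apply: lt_le_trans mM; apply: hlt; rewrite u0.
Qed.

Lemma chainV n (V : 'rV[R]_n -> R) (x : R -> 'rV[R]_n) (t : R) dx :
  differentiable V (x t) -> is_derive t 1 x dx ->
  is_derive t 1 (V \o x) ('d V (x t) dx).
Proof.
move=> dV [/derivable1_diffP dxd dxv].
have dc : differentiable (V \o x) t by exact: differentiable_comp.
split; first exact/derivable1_diffP.
by rewrite deriveE // diff_comp //= -(deriveE _ dxd) dxv.
Qed.

Lemma powR_split (a1 a2 d v mu : R) : 0 < v ->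
  - a1 * v `^ (1 + mu^-1) - a2 * v `^ (1 - mu^-1) + d * v =
  - v `^ (1 - mu^-1) * (a1 * (v `^ mu^-1) ^+ 2 - d * v `^ mu^-1 + a2).
Proof.
move=> v0; have vn : v != 0 by rewrite gt_eqF.
have P1 : v `^ (1 + mu^-1) = v `^ (1 - mu^-1) * v `^ mu^-1 * v `^ mu^-1.
  rewrite -!powRD ?vn ?implybT //; congr (_ `^ _); ring.
have P2 : v = v `^ (1 - mu^-1) * v `^ mu^-1.
  rewrite -powRD ?vn ?implybT //.
  have E : (1 - mu^-1) + mu^-1 = 1 by ring.
  by rewrite E powRr1 // ltW.
rewrite P1 [in d * v]P2; ring.
Qed.

Lemma powR_inv_mul (v mu : R) : 0 < v ->
  v `^ (mu^-1 - 1) * v `^ (1 - mu^-1) = 1.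
Proof.
move=> v0; rewrite -powRD; last by rewrite (gt_eqF v0) implybT.
have E : mu^-1 - 1 + (1 - mu^-1) = 0 by ring.
by rewrite E powRr0.
Qed.

Lemma wder (v : R -> R) dv t mu : 0 < v t -> is_derive t 1 v dv ->
  is_derive t 1 (fun s => v s `^ mu^-1) (mu^-1 * v t `^ (mu^-1 - 1) * dv).
Proof.
move=> v0 hv.
have hp := is_derive1_powR mu^-1 v0.
exact: (is_derive1_comp hp hv).
Qed.

Lemma ineq_chain (P vv dvv Q mu : R) : 0 < vv -> 0 < mu -> 0 <= P ->
  dvv <= - vv `^ (1 - mu^-1) * Q -> 1 <= P * Q * mu^-1 ->
  P * (mu^-1 * vv `^ (mu^-1 - 1) * dvv) <= -1.
Proof.
move=> v0 m0 P0 hd hPQ.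
have a0 : 0 < mu^-1 * vv `^ (mu^-1 - 1) by rewrite mulr_gt0 ?invr_gt0 ?powR_gt0.
have h1 : mu^-1 * vv `^ (mu^-1 - 1) * dvv <= - (mu^-1 * Q).
  have := ler_wpM2l (ltW a0) hd.
  have ab := @powR_inv_mul vv mu v0.
  set a := vv `^ (mu^-1 - 1) in ab *; set b := vv `^ (1 - mu^-1) in ab *.
  have -> : mu^-1 * a * (- b * Q) = - (mu^-1 * Q) * (a * b) by ring.
  by rewrite ab mulr1.
have := ler_wpM2l P0 h1; move=> h2; apply: le_trans h2 _.
rewrite mulrN lerNl opprK.
have -> : P * (mu^-1 * Q) = P * Q / mu by ring.
by [].
Qed.

Lemma caseA (v dv : R -> R) (a1 a2 d1 d mu T : R) :
  0 < a1 -> 0 < a2 -> 1 < mu -> d1 <= d -> d ^+ 2 < 4 * a1 * a2 -> 0 < T ->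
  (forall t : R, 0 < t -> is_derive t 1 v (dv t)) ->
  (forall t : R, 0 < t -> 0 < v t -> dv t <= - v t `^ (1 - mu^-1) *
       (a1 * (v t `^ mu^-1) ^+ 2 - d1 * v t `^ mu^-1 + a2)) ->
  let k1 := Num.sqrt ((4 * a1 * a2 - d ^+ 2) / (4 * a1 ^+ 2)) in
  let K := mu / (a1 * k1) in
  K * atan ((0 - d / (2 * a1)) / k1) + T = K * (pi / 2) ->
  (forall t : R, 0 < t <= T -> 0 < v t) -> False.
Proof.
move=> a10 a20 mu1 dd1 dsq T0 hvd hdv k1 K hT hpos.
have X0 : 0 < (4 * a1 * a2 - d ^+ 2) / (4 * a1 ^+ 2).
  by rewrite divr_gt0 ?subr_gt0 // mulr_gt0 // exprn_gt0.
have k1p : 0 < k1 by rewrite sqrtr_gt0.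
have k1sq : k1 ^+ 2 = (4 * a1 * a2 - d ^+ 2) / (4 * a1 ^+ 2).
  by rewrite sqr_sqrtr // ltW.
have mu0 : 0 < mu by lra.
have Kp : 0 < K by rewrite divr_gt0 // mulr_gt0.
set p := d / (2 * a1).
pose Phi y := K * atan ((y - p) / k1).
pose dPhi y := K * ((1 + ((y - p)/k1)^+2)^-1 * k1^-1).
have q0p : forall y, 0 < a1 * y^+2 - d * y + a2.
  move=> y; have : 0 < a1 * (4 * (a1 * y^+2 - d * y + a2)).
    have -> : a1 * (4 * (a1 * y^+2 - d * y + a2)) =
       (2 * a1 * y - d) ^+ 2 + (4 * a1 * a2 - d ^+ 2) by ring.
    by apply: ltr_wpDl; [exact: sqr_ge0 | rewrite subr_gt0].
  by rewrite pmulr_rgt0 // pmulr_rgt0.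
have dPhiE : forall y, dPhi y = mu / (a1 * y^+2 - d * y + a2).
  move=> y.
  have k1n : k1 != 0 by rewrite gt_eqF.
  have a1n : a1 != 0 by rewrite gt_eqF.
  have s0 : 0 < k1 ^+ 2 + (y - p) ^+ 2 by rewrite ltr_pwDl ?sqr_ge0 ?exprn_gt0.
  have E1 : dPhi y = mu / (a1 * (k1^+2 + (y - p)^+2)).
    rewrite /dPhi /K.
    have -> : 1 + ((y - p) / k1) ^+ 2 = (k1^+2 + (y - p)^+2) / k1 ^+ 2.
      by field.
    by field; rewrite (gt_eqF s0) a1n k1n.
  by rewrite E1 k1sq /p; congr (mu / _); field.
have hPhi : forall y : R, is_derive y (1:R) Phi (dPhi y).
  move=> y; rewrite /Phi /dPhi; apply: is_derive_eq.
  by rewrite scaler0 add0r subr0 [k1^-1 *: 1]mulr1.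
pose w t := v t `^ mu^-1.
apply: (@settle (fun t => Phi (w t))
  (fun t => dPhi (w t) * (mu^-1 * v t `^ (mu^-1 - 1) * dv t)) T (Phi 0) T0).
- move=> t /andP[t0 tT].
  have vt0 : 0 < v t by apply: hpos; rewrite t0.
  have H := @is_derive1_comp _ Phi (fun s => v s `^ mu^-1) t _ _ (hPhi _) (@wder v (dv t) t mu vt0 (hvd t t0)).
  exact: H.
- move=> t /andP[t0 tT].
  have vt0 : 0 < v t by apply: hpos; rewrite t0 ltW.
  have w0 : 0 <= w t by exact: powR_ge0.
  apply: ineq_chain => //; first by rewrite dPhiE ltW // divr_gt0.
    exact: hdv.
  rewrite dPhiE -/(w t).
  set Q := a1 * w t ^+ 2 - d1 * w t + a2.
  set Q0 := a1 * w t ^+ 2 - d * w t + a2.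
  have QQ : Q0 <= Q by rewrite /Q /Q0 lerD2r lerD2l lerN2 ler_wpM2r.
  have Q0p : 0 < Q0 by exact: q0p.
  have -> : mu / Q0 * Q / mu = Q / Q0 by field; rewrite !gt_eqF.
  by rewrite ler_pdivlMr // mul1r.
- move=> t /andP[t0 tT]; rewrite /Phi hT -/p ler_pM2l //.
  exact/ltW/atan_ltpi2.
- rewrite /Phi ltr_pM2l // ; apply: lt_atan; rewrite ltr_pM2r ?invr_gt0 //.
  by rewrite ltrD2r; apply: powR_gt0; apply: hpos; rewrite T0 lexx.
Qed.

Lemma wm_props (a1 a2 d1 : R) :
  0 < a1 -> 0 < a2 -> 4 * a1 * a2 <= d1 ^+ 2 -> 0 < d1 ->
  let S := Num.sqrt (d1 ^+ 2 - 4 * a1 * a2) in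
  let wm := (d1 - S) / (2 * a1) in
  let s := Num.sqrt (a1 * a2) in
  [/\ 0 < wm, forall y, 0 <= y -> y < wm -> 0 < a1 * y ^+ 2 - d1 * y + a2
    & forall y, 0 <= y -> y <= wm ->
        s * (wm - y) ^+ 2 <= wm * (a1 * y ^+ 2 - d1 * y + a2)].
Proof.
move=> a10 a20 hd d10 S wm s.
have S0 : 0 <= S by exact: sqrtr_ge0.
have Ssq : S ^+ 2 = d1 ^+ 2 - 4 * a1 * a2 by rewrite sqr_sqrtr // subr_ge0.
have s0 : 0 < s by rewrite sqrtr_gt0 mulr_gt0.
have ssq : s ^+ 2 = a1 * a2 by rewrite sqr_sqrtr // ltW // mulr_gt0.
have Sd : S < d1.
  have h : S ^+ 2 < d1 ^+ 2.
    by rewrite Ssq ltrBlDr ltrDl !mulr_gt0.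
  by move: h; rewrite ltr_pXn2r // ?nnegrE // ltW.
have a1n : a1 != 0 by rewrite gt_eqF.
have wm0 : 0 < wm by rewrite divr_gt0 ?subr_gt0 // mulr_gt0.
pose wp := (d1 + S) / (2 * a1).
have wmp : wm <= wp by rewrite ler_pM2r ?invr_gt0 ?mulr_gt0 //; lra.
have e1 : a1 * (wm + wp) = d1 by rewrite /wm /wp; field.
have e2 : a1 * (wm * wp) = a2.
  have -> : a1 * (wm * wp) = (d1 ^+ 2 - S ^+ 2) / (4 * a1) by rewrite /wm /wp; field.
  by rewrite Ssq; field.
have qE : forall y, a1 * y ^+ 2 - d1 * y + a2 = a1 * ((wm - y) * (wp - y)).
  move=> y; transitivity (a1 * y ^+ 2 - a1 * (wm + wp) * y + a1 * (wm * wp)).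
    by rewrite e1 e2.
  ring.
split => //.
  move=> y y0 ywm; rewrite qE; apply: mulr_gt0 => //; apply: mulr_gt0; lra.
move=> y y0 ywm; rewrite qE.
pose g := s / a1.
have sg : s = a1 * g by rewrite /g; field.
have gsq : g ^+ 2 = wm * wp.
  apply: (mulfI a1n); rewrite e2 /g; apply: (mulfI a1n).
  have -> : a1 * (a1 * (s / a1) ^+ 2) = s ^+ 2 by field.
  by rewrite ssq; ring.
have g0 : 0 < g by rewrite /g divr_gt0.
have wmg : wm <= g.
  have : wm ^+ 2 <= g ^+ 2 by rewrite gsq ler_pM2l.
  by rewrite ler_pXn2r // ?nnegrE ltW.
have -> : wm * (a1 * ((wm - y) * (wp - y))) =
   s * (wm - y) ^+ 2 + a1 * (wm - y) * ((g - wm) * (g + y)) +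
   a1 * (wm - y) * (wm * wp - g ^+ 2) by rewrite sg; ring.
rewrite gsq subrr mulr0 addr0 lerDl; apply: mulr_ge0; first by apply: mulr_ge0; lra.
by apply: mulr_ge0; lra.
Qed.

Lemma caseB (v dv : R -> R) (a1 a2 d1 mu k T wm s : R) :
  1 < mu -> 0 < k -> k < 1 -> 0 < wm -> 0 < s ->
  (forall y, 0 <= y -> y <= wm ->
     s * (wm - y) ^+ 2 <= wm * (a1 * y ^+ 2 - d1 * y + a2)) ->
  (forall t : R, 0 < t -> is_derive t 1 v (dv t)) ->
  (forall t : R, 0 < t -> 0 < v t -> dv t <= - v t `^ (1 - mu^-1) *
       (a1 * (v t `^ mu^-1) ^+ 2 - d1 * v t `^ mu^-1 + a2)) ->
  T = mu * k / ((1 - k) * s) ->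
  (forall t : R, 0 < t <= T -> 0 < v t) ->
  (forall t : R, 0 < t -> v t `^ mu^-1 <= k * wm) ->
  False.
Proof.
move=> mu1 k0 k1 wm0 s0 hb hvd hdv hT hpos hinv.
have mu0 : 0 < mu by lra.
have T0 : 0 < T by rewrite hT divr_gt0 ?mulr_gt0 // subr_gt0.
pose C := mu * wm / s.
have C0 : 0 < C by rewrite divr_gt0 // mulr_gt0.
pose Phi y := C * (wm - y)^-1.
pose dPhi y := C * ((wm - y) ^+ 2)^-1.
have hPhi : forall y : R, y < wm -> is_derive y (1:R) Phi (dPhi y).
  move=> y ywm.
  have h1 : is_derive y (1:R) (fun y => wm - y) (-1).
    by apply: is_derive_eq; rewrite add0r mul1r.
  have ne : wm - y != 0 by rewrite gt_eqF // subr_gt0.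
  have h2 := @is_deriveV _ (fun y => wm - y) y _ _ ne h1.
  rewrite /Phi /dPhi; apply: is_derive_eq.
  by change (C * (- (wm - y) ^- 2 * -1) = C / (wm - y) ^+ 2); rewrite mulrN1 opprK.
pose w t := v t `^ mu^-1.
have wlt : forall t, 0 < t -> w t < wm.
  move=> t t0; apply: le_lt_trans (hinv t t0) _.
  by rewrite -{2}(mul1r wm) ltr_pM2r.
apply: (@settle (fun t => Phi (w t))
  (fun t => dPhi (w t) * (mu^-1 * v t `^ (mu^-1 - 1) * dv t)) T (Phi 0) T0).
- move=> t /andP[t0 tT].
  have vt0 : 0 < v t by apply: hpos; rewrite t0.
  have H := @is_derive1_comp _ Phi (fun s => v s `^ mu^-1) t _ _ (hPhi _ (wlt t t0))
     (@wder v (dv t) t mu vt0 (hvd t t0)).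
  exact: H.
- move=> t /andP[t0 tT].
  have vt0 : 0 < v t by apply: hpos; rewrite t0 ltW.
  have w0 : 0 <= w t by exact: powR_ge0.
  have wm1 : 0 < wm - w t by rewrite subr_gt0 wlt.
  apply: ineq_chain => //.
  + by rewrite /dPhi mulr_ge0 // ?invr_ge0 ?exprn_ge0 // ltW.
  + exact: hdv.
  +
  rewrite -/(w t).
  have -> : dPhi (w t) * (a1 * w t ^+ 2 - d1 * w t + a2) / mu =
     wm * (a1 * w t ^+ 2 - d1 * w t + a2) / (s * (wm - w t) ^+ 2).
    by rewrite /dPhi /C; field; rewrite !gt_eqF.
  rewrite ler_pdivlMr ?mulr_gt0 ?exprn_gt0 // mul1r.
  by apply: hb => //; apply/ltW/wlt.
- move=> t /andP[t0 tT].
  have wm1 : 0 < wm - w t by rewrite subr_gt0 wlt.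
  have km : 0 < (1 - k) * wm by rewrite mulr_gt0 // subr_gt0.
  have -> : Phi 0 + T = C * ((1 - k) * wm)^-1.
    by rewrite hT /Phi /C; field; rewrite !gt_eqF // subr_gt0.
  rewrite /Phi ler_pM2l // ler_pV2 ?inE ?unitfE ?gt_eqF ?wm1 ?km //.
  have := hinv t t0; rewrite -/(w t); lra.
- have wT0 : 0 < w T by apply: powR_gt0; apply: hpos; rewrite T0 lexx.
  have wm1 : 0 < wm - w T by rewrite subr_gt0 wlt.
  rewrite /Phi ltr_pM2l // ltr_pV2 ?inE ?unitfE ?gt_eqF ?wm1 ?subr0 ?wm0 //; lra.
Qed.

Lemma sol_facts n (f : 'rV[R]_n -> 'rV[R]_n) (V : 'rV[R]_n -> R) x0 x :
  (forall y, differentiable V y) -> is_solution f x0 x ->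
  (forall t : R, 0 < t -> is_derive t 1 (V \o x) ('d V (x t) (f (x t)))) /\
  {within `[0, +oo[, continuous (V \o x)}.
Proof.
move=> Vd [_ [hxc hxd]]; split.
  by move=> t t0; apply: chainV => //; exact: hxd.
have [_ hx0] := (continuous_within_itvcyP 0 x).1 hxc.
apply/continuous_within_itvcyP; split.
  move=> t; rewrite in_itv /= andbT => t0.
  have [/derivable1_diffP dx _] := hxd t t0.
  exact: differentiable_continuous (differentiable_comp dx (Vd _)).
apply: cvg_comp hx0 _.
exact: (differentiable_continuous (Vd (x 0))).
Qed.

Lemma finish n (V : 'rV[R]_n -> R) (x : R -> 'rV[R]_n) (dv : R -> R) (T : R) :
  V 0 = 0 -> (forall y, y != 0 -> 0 < V y) ->
  (forall t : R, 0 < t -> is_derive t 1 (V \o x) (dv t)) ->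
  {within `[0, +oo[, continuous (V \o x)} ->
  (forall t : R, 0 < t -> dv t <= 0) ->
  ((forall t : R, 0 < t <= T -> 0 < V (x t)) -> False) ->
  settles_by x T.
Proof.
move=> V0 Vp hvd hvc hneg hno t Tt.
have Vge0 : forall y, 0 <= V y.
  by move=> y; case: (eqVneq y 0) => [->|/Vp/ltW //]; rewrite V0.
case: (pselect (exists t1, 0 <= t1 <= T /\ V (x t1) = 0)).
  move=> [t1 [/andP[t10 t1T] z]].
  have := @mono_on (V \o x) dv t hvd hvc _ t1 t t10 (le_trans t1T Tt) (lexx t).
  rewrite /= z => /(_ (fun u hu => hneg u (andP hu).1)) h.
  apply/eqP; apply: contraTT h => /Vp; rewrite -ltNge //.
move=> nz; exfalso; apply: hno => u /andP[u0 uT].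
rewrite lt_neqAle Vge0 andbT eq_sym; apply/eqP => E.
by apply: nz; exists u; rewrite ltW.
Qed.

Lemma sqrt_div4 (a X : R) : 0 < a -> 0 <= X ->
  Num.sqrt (X / (4 * a ^+ 2)) = Num.sqrt X / (2 * a).
Proof.
move=> a0 X0.
have -> : X / (4 * a ^+ 2) = X * ((2 * a) ^+ 2)^-1.
  by field; rewrite gt_eqF.
rewrite sqrtrM // sqrtrV ?exprn_ge0 ?mulr_ge0 ?ltW // sqrtr_sqr gtr0_norm //.
by rewrite mulr_gt0.
Qed.

Lemma powR_inv_pow (a mu : R) : 0 <= a -> 0 < mu -> (a `^ mu) `^ mu^-1 = a.
Proof.
by move=> a0 m0; rewrite -powRrM mulfV ?gt_eqF // powRr1.
Qed.

Lemma qpos (a1 a2 d y : R) : 0 < a1 -> d ^+ 2 < 4 * a1 * a2 ->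
  0 < a1 * y ^+ 2 - d * y + a2.
Proof.
move=> a10 dsq; have : 0 < a1 * (4 * (a1 * y^+2 - d * y + a2)).
  have -> : a1 * (4 * (a1 * y^+2 - d * y + a2)) =
     (2 * a1 * y - d) ^+ 2 + (4 * a1 * a2 - d ^+ 2) by ring.
  by apply: ltr_wpDl; [exact: sqr_ge0 | rewrite subr_gt0].
by rewrite pmulr_rgt0 // pmulr_rgt0.
Qed.

End Gen.

Theorem theorem1 (R : realType) (n : nat) (f : 'rV[R]_n -> 'rV[R]_n)
  (V : 'rV[R]_n -> R) (alpha1 alpha2 delta1 mu k : R)
  (hf : continuous f) (hf0 : f 0 = 0)
  (hex : forall x0, exists x, is_solution f x0 x)
  (huniq : forall x0 x y, is_solution f x0 x -> is_solution f x0 y ->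
     forall t, 0 <= t -> x t = y t)
  (hV : C1 V) (hpd : positive_definite V) (hproper : proper_fun V)
  (ha1 : 0 < alpha1) (ha2 : 0 < alpha2) (hmu : 1 < mu)
  (hk0 : 0 < k) (hk1 : k < 1)
  (hdV : forall x, x != 0 ->
     'd V x (f x) <= - alpha1 * powR (V x) (1 + mu^-1)
                     - alpha2 * powR (V x) (1 - mu^-1) + delta1 * V x) :
  let r := delta1 / (2 * Num.sqrt (alpha1 * alpha2)) in
  let k1 := Num.sqrt ((4 * alpha1 * alpha2 - delta1 ^+ 2) / (4 * alpha1 ^+ 2)) in
  let k2 := - delta1 / Num.sqrt (4 * alpha1 * alpha2 - delta1 ^+ 2) in
  let D : set 'rV[R]_n :=
    if r < 1 then setT
    else [set x | V x <= powR k mu *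
           powR ((delta1 - Num.sqrt (delta1 ^+ 2 - 4 * alpha1 * alpha2)) / (2 * alpha1)) mu] in
  nbhs (0 : 'rV[R]_n) D /\
  forall x0 x, D x0 -> is_solution f x0 x ->
    (forall t, 0 <= t -> D (x t)) /\
    (r <= 0 -> settles_by x (mu * pi / (2 * Num.sqrt (alpha1 * alpha2)))) /\
    (0 <= r < 1 -> settles_by x (mu / (alpha1 * k1) * (pi / 2 - atan k2))) /\
    (1 <= r -> settles_by x (mu * k / ((1 - k) * Num.sqrt (alpha1 * alpha2)))).
Proof.
move=> r k1 k2 D.
have Vd := hV.1.
have [V0 Vp] := hpd.
have Vge0 : forall y, 0 <= V y.
  by move=> y; case: (eqVneq y 0) => [->|/Vp/ltW //]; rewrite V0.
pose s := Num.sqrt (alpha1 * alpha2).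
have s0 : 0 < s by rewrite sqrtr_gt0 mulr_gt0.
have ssq : s ^+ 2 = alpha1 * alpha2 by rewrite sqr_sqrtr // ltW // mulr_gt0.
have mu0 : 0 < mu by lra.
have mui : 0 < mu^-1 by rewrite invr_gt0.
have hdvg : forall x : R -> 'rV[R]_n, forall t : R, 0 < V (x t) ->
   'd V (x t) (f (x t)) <= - V (x t) `^ (1 - mu^-1) *
     (alpha1 * (V (x t) `^ mu^-1) ^+ 2 - delta1 * V (x t) `^ mu^-1 + alpha2).
  move=> x t vt0.
  have xn : x t != 0 by apply: contraTneq vt0 => ->; rewrite V0 ltxx.
  by rewrite -powR_split //; exact: hdV.
have hdv0 : forall x : R -> 'rV[R]_n, forall t : R, V (x t) = 0 ->
    'd V (x t) (f (x t)) = 0.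
  move=> x t vt; case: (eqVneq (x t) 0) => [->|/Vp]; first by rewrite hf0 linear0.
  by rewrite vt ltxx.
case: (pselect (r < 1)) => rl.
- have DE : D = setT by rewrite /D rl.
  have dl : delta1 < 2 * s by move: rl; rewrite /r ltr_pdivrMr ?mulr_gt0 // mul1r.
  have hq : forall y, 0 <= y -> 0 < alpha1 * y ^+ 2 - delta1 * y + alpha2.
    move=> y y0; case: (leP delta1 0) => d0.
      have : 0 <= - delta1 * y by rewrite mulr_ge0 // oppr_ge0.
      have : 0 <= alpha1 * y ^+ 2 by rewrite mulr_ge0 ?sqr_ge0 // ltW.
      lra.
    apply: qpos => //.
    have : delta1 ^+ 2 < (2 * s) ^+ 2 by rewrite ltr_pXn2r // ?nnegrE ltW // mulr_gt0.
    by rewrite exprMn ssq; lra.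
  have hdvn : forall x : R -> 'rV[R]_n, forall t : R, 0 < t ->
      'd V (x t) (f (x t)) <= 0.
    move=> x t t0; case: (eqVneq (V (x t)) 0) => [vt|vt]; first by rewrite hdv0.
    have vt0 : 0 < V (x t) by rewrite lt_neqAle eq_sym vt Vge0.
    apply: le_trans (hdvg x t vt0) _.
    by rewrite mulNr oppr_le0 mulr_ge0 ?powR_ge0 // ltW // hq // powR_ge0.
  split; first by rewrite DE; exact: filterT.
  move=> x0 x _ hs; have [hvd hvc] := @sol_facts R n f V x0 x Vd hs.
  split; first by rewrite DE.
  split; last split; last first.
  + by move=> r1; exfalso; move: rl; rewrite ltNge r1.
  + move=> /andP[r0 _].
    have dp : 0 <= delta1 by move: r0; rewrite /r ler_pdivlMr ?mulr_gt0 // mul0r.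
    have dsq : delta1 ^+ 2 < 4 * alpha1 * alpha2.
      have : delta1 ^+ 2 < (2 * s) ^+ 2 by rewrite ltr_pXn2r // ?nnegrE ltW // mulr_gt0.
      by rewrite exprMn ssq; lra.
    pose X := 4 * alpha1 * alpha2 - delta1 ^+ 2.
    have X0 : 0 < X by rewrite subr_gt0.
    have sX : 0 < Num.sqrt X by rewrite sqrtr_gt0.
    have k1E : k1 = Num.sqrt X / (2 * alpha1) by rewrite /k1 sqrt_div4 // ltW.
    have k1p : 0 < k1 by rewrite k1E divr_gt0 // mulr_gt0.
    apply: (@finish R n V x _ _ V0 Vp hvd hvc (hdvn x)) => hpos.
    have H := @caseA R (V \o x) (fun t => 'd V (x t) (f (x t))) alpha1 alpha2 delta1 delta1 mu
      (mu / (alpha1 * k1) * (pi / 2 - atan k2)) ha1 ha2 hmu (lexx _) dsq.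
    apply: H => //.
    * by rewrite mulr_gt0 ?divr_gt0 ?mulr_gt0 // subr_gt0 atan_ltpi2.
    * by move=> t _; exact: hdvg.
    rewrite -/X sqrt_div4 ?ltW // -k1E /k2 -/X.
    have -> : (0 - delta1 / (2 * alpha1)) / k1 = - delta1 / Num.sqrt X.
      by rewrite k1E; field; rewrite !gt_eqF.
    ring.
  move=> r0.
  have d0 : delta1 <= 0 by move: r0; rewrite /r ler_pdivrMr ?mulr_gt0 // mul0r.
  apply: (@finish R n V x _ _ V0 Vp hvd hvc (hdvn x)) => hpos.
  have H := @caseA R (V \o x) (fun t => 'd V (x t) (f (x t))) alpha1 alpha2 delta1 0 mu
    (mu * pi / (2 * s)) ha1 ha2 hmu d0.
  have s4 : Num.sqrt (4 * alpha1 * alpha2) = 2 * s.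
    have -> : 4 * alpha1 * alpha2 = 2 ^+ 2 * (alpha1 * alpha2) by ring.
    by rewrite sqrtrM ?exprn_ge0 // sqrtr_sqr gtr0_norm.
  apply: H => //.
  * by rewrite expr2 mul0r !mulr_gt0.
  * by apply: divr_gt0; [apply: mulr_gt0 => //; exact: pi_gt0 | rewrite mulr_gt0].
  * by move=> t _; exact: hdvg.
  rewrite expr2 mul0r subr0 mul0r subrr mul0r atan0 mulr0 add0r.
  rewrite sqrt_div4 ?mulr_ge0 ?ltW // s4.
  by field; rewrite !gt_eqF.
- have r1 : 1 <= r by rewrite leNgt; apply/negP.
  have d2s : 2 * s <= delta1 by move: r1; rewrite /r ler_pdivlMr ?mulr_gt0 // mul1r.
  have dpos : 0 < delta1 by lra.
  have hd4 : 4 * alpha1 * alpha2 <= delta1 ^+ 2.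
    have : (2 * s) ^+ 2 <= delta1 ^+ 2 by rewrite ler_pXn2r // ?nnegrE ltW // mulr_gt0.
    by rewrite exprMn ssq; lra.
  have [wm0 hqw hb] := @wm_props R alpha1 alpha2 delta1 ha1 ha2 hd4 dpos.
  pose wm := (delta1 - Num.sqrt (delta1 ^+ 2 - 4 * alpha1 * alpha2)) / (2 * alpha1).
  rewrite -/wm in wm0 hqw hb.
  pose c := powR k mu * powR wm mu.
  pose M := powR wm mu.
  have DE : D = [set y | V y <= c] by rewrite /D (negbTE (introN idP rl)).
  have M0 : 0 < M by rewrite powR_gt0.
  have kmu : k `^ mu < 1.
    have := @gt0_ltr_powR R mu mu0 k 1; rewrite !nnegrE ltW // ler01 => /(_ isT isT hk1).
    by rewrite powR1.
  have c0 : 0 < c by rewrite mulr_gt0 // powR_gt0.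
  have cM : c < M by rewrite /c -[X in _ < X]mul1r ltr_pM2r.
  have hwM : forall y, 0 <= y -> y < M -> y `^ mu^-1 < wm.
    move=> y y0 yM; have Mn : M \is Num.nneg by rewrite nnegrE ltW.
    have yn : y \is Num.nneg by rewrite nnegrE.
    have := @gt0_ltr_powR R mu^-1 mui y M yn Mn yM.
    by rewrite /M powR_inv_pow // ltW.
  have hwc : forall y, 0 <= y -> y <= c -> y `^ mu^-1 <= k * wm.
    move=> y y0 yc; have cn : c \is Num.nneg by rewrite nnegrE ltW.
    have yn : y \is Num.nneg by rewrite nnegrE.
    have := @ge0_ler_powR R mu^-1 (ltW mui) y c yn cn yc.
    by rewrite /c -(powRM _ (ltW hk0) (ltW wm0)) powR_inv_pow // mulr_ge0 // ltW.
  have hdvM : forall x : R -> 'rV[R]_n, forall t : R, V (x t) < M ->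
      'd V (x t) (f (x t)) <= 0.
    move=> x t vM; case: (eqVneq (V (x t)) 0) => [vt|vt]; first by rewrite hdv0.
    have vt0 : 0 < V (x t) by rewrite lt_neqAle eq_sym vt Vge0.
    apply: le_trans (hdvg x t vt0) _.
    rewrite mulNr oppr_le0 mulr_ge0 ?powR_ge0 // ltW // hqw ?powR_ge0 //.
    exact: hwM (Vge0 _) vM.
  split.
    rewrite DE.
    have hV0 : V y @[y --> (0:'rV[R]_n)] --> V 0 := differentiable_continuous (Vd 0).
    have : \forall y \near (0:'rV[R]_n), V y < c by apply: cvgr_lt hV0 _ _; rewrite V0.
    by apply: filterS => y /ltW.
  move=> x0 x Dx0 hs; have [hvd hvc] := @sol_facts R n f V x0 x Vd hs.
  have hinv : forall t : R, 0 <= t -> V (x t) <= c.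
    apply: (@no_up R (V \o x) _ c M hvd hvc _ cM).
      by move: Dx0; rewrite DE /= hs.1.
    by move=> t _; exact: hdvM.
  split; first by rewrite DE; exact: hinv.
  split; first by move=> r0; exfalso; have := le_trans r1 r0; rewrite ler10.
  split; first by move=> /andP[_ r0]; exfalso; move: r0; rewrite ltNge r1.
  move=> _.
  apply: (@finish R n V x _ _ V0 Vp hvd hvc).
    by move=> t t0; apply: hdvM; apply: le_lt_trans (hinv t (ltW t0)) cM.
  move=> hpos.
  apply: (@caseB R (V \o x) (fun t => 'd V (x t) (f (x t))) alpha1 alpha2 delta1 mu k
    _ wm s hmu hk0 hk1 wm0 s0 hb hvd (fun t _ => hdvg x t) erefl hpos).
  by move=> t t0; apply: hwc; [exact: Vge0 | exact: hinv (ltW t0)].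
Qed.
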